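(* Let $0\le m\le n$ and $\lambda=2^m1^{n-m}$. If $T,T'\in S(\lambda)$ have first-column entries $a_1,\dots,a_n$ and $a'_1,\dots,a'_n$ (top to bottom) with $\mathrm{dep}(a_i)=\mathrm{dep}(a'_i)$ for all $1\le i\le n$, then $T=T'$.
   Context: $\lambda=2^m1^{n-m}$ is the shape with $m$ rows of length $2$ followed by $n-m$ rows of length $1$ (left-justified), $N=n+m$ boxes. $S(\lambda)$: standard Young tableaux of shape $\lambda$ (entries $1,\dots,N$ once each, rows strictly increasing left to right, columns strictly increasing top to bottom). For an entry $v$ of $T$ in column $j$: $\mathrm{dep}(v)$ = (number of entries of column $j$ smaller than $v$) minus (number of entries of column $j+1$ smaller than $v$, or $0$ if there is no column $j+1$). *)

(* Defs.v *)
From mathcomp Require Import all_boot all_order all_algebra.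
Set Implicit Arguments. Unset Strict Implicit. Unset Printing Implicit Defensive.

(* A tableau of shape 2^m 1^(n-m) is given by its list of columns
   [:: c1; c2], each column listed top to bottom: c1 has n entries,
   c2 has m entries; row i (0-indexed) is (nth 0 c1 i) for i >= m and
   (nth 0 c1 i, nth 0 c2 i) for i < m. *)

Definition is_SYT_2m1 (n m : nat) (c1 c2 : seq nat) : bool :=
  [&& size c1 == n, size c2 == m,
      perm_eq (c1 ++ c2) (iota 1 (n + m)),
      sorted ltn c1, sorted ltn c2
    & all (fun i => nth 0 c1 i < nth 0 c2 i) (iota 0 m)].

(* dep of an entry v lying in column j (0-indexed) of the tableau given by
   its list of columns: #(entries of column j smaller than v) minus
   #(entries of column j+1 smaller than v) (0 if there is no column j+1,
   as nth [::] returns the empty column then). *)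
Definition dep (cols : seq (seq nat)) (j v : nat) : int :=
  (count (fun x => x < v) (nth [::] cols j))%:Z
  - (count (fun x => x < v) (nth [::] cols j.+1))%:Z.

(* Main.v *)
Require Import Defs.
From mathcomp Require Import all_boot all_order all_algebra.
From mathcomp Require Import zify.
Set Implicit Arguments. Unset Strict Implicit.

Lemma count_lt_sorted (s : seq nat) i :
  sorted ltn s -> i < size s -> count (fun x => x < nth 0 s i) s = i.
Proof.
elim: s i => [|x s IH] i //= Hs Hi.
have Hall : all (fun y => x < y) s.
  by apply: (order_path_min ltn_trans Hs).
have Hs' : sorted ltn s by apply: (path_sorted Hs).
case: i Hi => [|j] Hi /=.
  rewrite ltnn add0n; apply/eqP; rewrite -leqn0 leqNgt -has_count.
  apply/hasP => -[y Hy Hyx]; move/allP: Hall => /(_ y Hy); lia.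
have Hj : j < size s by [].
have Hxn : x < nth 0 s j by move/allP: Hall; apply; apply: mem_nth.
by rewrite Hxn IH.
Qed.

Lemma count_lt_iota v N :
  1 <= v <= N -> count (fun x => x < v) (iota 1 N) = v.-1.
Proof.
move=> /andP [H1 H2].
have -> : N = v.-1 + (N - v.-1) by lia.
rewrite iotaD count_cat.
have -> : count (fun x => x < v) (iota 1 v.-1) = v.-1.
  rewrite -[in RHS](size_iota 1 v.-1); apply/eqP; rewrite -all_count.
  apply/allP => y; rewrite mem_iota; lia.
have -> : count (fun x => x < v) (iota (1 + v.-1) (N - v.-1)) = 0.
  apply/eqP; rewrite -leqn0 leqNgt -has_count; apply/hasP => -[y].
  rewrite mem_iota; lia.
by rewrite addn0.
Qed.

Lemma SYTP n m c1 c2 : is_SYT_2m1 n m c1 c2 ->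
  [/\ size c1 = n, size c2 = m, perm_eq (c1 ++ c2) (iota 1 (n + m)),
      sorted ltn c1 & sorted ltn c2].
Proof. by case/and5P => /eqP -> /eqP -> ? ? /andP [? _]. Qed.

Lemma c1_formula n m c1 c2 k :
  is_SYT_2m1 n m c1 c2 -> k < n ->
  nth 0 c1 k = k + count (fun x => x < nth 0 c1 k) c2 + 1.
Proof.
case/SYTP => Hs1 Hs2 Hp Hso1 Hso2 Hk.
set v := nth 0 c1 k.
have Hin : v \in iota 1 (n + m).
  by rewrite -(perm_mem Hp) mem_cat mem_nth // Hs1.
have := @count_lt_iota v (n + m).
rewrite -(permP Hp) count_cat count_lt_sorted ?Hs1 //.
move: Hin; rewrite mem_iota => Hin H; rewrite H; lia.
Qed.

Theorem mainTheorem16 (n m : nat) (c1 c2 c1' c2' : seq nat) :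
  m <= n ->
  is_SYT_2m1 n m c1 c2 ->
  is_SYT_2m1 n m c1' c2' ->
  (forall i, i < n ->
     dep [:: c1; c2] 0 (nth 0 c1 i) = dep [:: c1'; c2'] 0 (nth 0 c1' i)) ->
  c1 = c1' /\ c2 = c2'.
Proof.
move=> _ HT HT' Hd.
have Hc1 : c1 = c1'.
  have := HT; have := HT'.
  case/SYTP => Hs1' _ _ Hso1' _; case/SYTP => Hs1 _ _ Hso1 _.
  apply: (eq_from_nth (x0 := 0)); first by rewrite Hs1 Hs1'.
  move=> k; rewrite Hs1 => Hk.
  rewrite (c1_formula HT Hk) (c1_formula HT' Hk).
  have := Hd k Hk; rewrite /dep /=.
  rewrite count_lt_sorted ?Hs1 // count_lt_sorted ?Hs1' //.
  lia.
split => //.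
move: HT HT'; rewrite -Hc1.
case/SYTP => _ _ Hp Hso1 Hso2; case/SYTP => _ _ Hp' _ Hso2'.
apply: (irr_sorted_eq ltn_trans ltnn Hso2 Hso2').
apply: perm_mem; rewrite -(perm_cat2l c1).
by apply: (perm_trans Hp); rewrite perm_sym.
Qed.
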